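(* Let $f:\mathbb{R}^n\to\mathbb{R}^n$ and let $x^*\in\mathbb{R}^n$ satisfy $f(x^* )=0$. Assume $f$ is continuously differentiable in a neighborhood $B_1(x^* )$ of $x^*$ and that the Jacobian $J_f(x^* )$ is nonsingular. Consider a nonlinear Krylov (nlKrylov) iteration as described in the context, generating iterates $x_{j+1}=x_j+P_jy_j$ with $y_j=-V_j^Tf(x_j)$, where $V_j^TV_j=I_{n_j}$. Define $W_j=J_f(x_j)P_j-V_j$, $$\mu_j=\frac{\|W_jy_j\|}{\|f(x_j)\|},\qquad \eta_j=\frac{\|f(x_j)+V_jy_j\|}{\|f(x_j)\|},$$ and suppose there is a constant $c$ with $0<c<1$ such that for all $j$, $$c_j:=\mu_j+\eta_j\le c<1.$$ Then there exists a neighborhood $B_0(x^* )$ of $x^*$ such that for every initial guess $x_0\in B_0(x^* )$ the nlKrylov iterates $\{x_j\}_j$ converge to $x^*$.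
   Context: Norms are Euclidean 2-norms and $J_f(x)$ denotes the Jacobian of $f$ at $x$. An nlKrylov method solves $f(x)=0$ as follows: at iteration $j$ it holds two matrices $P_j,V_j\in\mathbb{R}^{n\times n_j}$ (search directions and approximations of $J_f(x_j)P_j$, respectively, built from previous iterates, Jacobian-vector products and an inner linear solver applied to $J_f(x_j)\hat p=-f(x_j)$), where the columns of $V_j$ are orthonormal, i.e. $V_j^TV_j=I_{n_j}$. With residual $r_j=-f(x_j)$, the method sets $y_j=V_j^Tr_j=-V_j^Tf(x_j)$ and updates $x_{j+1}=x_j+P_jy_j$. The matrix $W_j=J_f(x_j)P_j-V_j$ measures the mismatch between $V_j$ and $J_f(x_j)P_j$. *)

(* Defs.v *)
From HB Require Import structures.
From mathcomp Require Import all_boot all_order all_algebra.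
From mathcomp Require Import all_classical all_reals all_analysis.
Set Implicit Arguments. Unset Strict Implicit. Unset Printing Implicit Defensive.
Import Order.TTheory GRing.Theory Num.Theory.
Import numFieldNormedType.Exports.
Local Open Scope ring_scope.

Definition enorm {R : realType} {m n : nat} (A : 'M[R]_(m, n)) : R :=
  Num.sqrt (\sum_(i < m) \sum_(j < n) A i j ^+ 2).

(* Jf f x is the usual Jacobian J_f(x) (acting on column vectors);
   MathComp's [jacobian] acts on row vectors, hence the transpose. *)
Definition Jf {R : realType} {n : nat} (f : 'rV[R]_n -> 'rV[R]_n) (x : 'rV[R]_n)
  : 'M[R]_n := (jacobian f x)^T.

(* Main.v *)
Require Import Defs.
From HB Require Import structures.
From mathcomp Require Import all_boot all_order all_algebra.
From mathcomp Require Import all_classical all_reals all_analysis.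
From mathcomp Require Import ring lra zify.
Import Order.TTheory GRing.Theory Num.Theory.
Import numFieldNormedType.Exports.
Local Open Scope classical_set_scope.
Local Open Scope ring_scope.
Section ENorm.
Variable R : realType.

Lemma CS2 (I : finType) (a b : I -> R) :
  (\sum_i a i * b i) ^+ 2 <= (\sum_i a i ^+ 2) * (\sum_i b i ^+ 2).
Proof.
have X : (\sum_i a i ^+ 2) * (\sum_i b i ^+ 2) =
   \sum_i \sum_j (a i ^+ 2 * b j ^+ 2).
  by rewrite big_distrl; apply: eq_bigr => i _; rewrite big_distrr.
have Y : (\sum_i a i * b i) ^+ 2 = \sum_i \sum_j (a i * b i * (a j * b j)).
  by rewrite expr2 big_distrl; apply: eq_bigr => i _; rewrite big_distrr.
have Z : \sum_i \sum_j (a i * b j - a j * b i) ^+ 2 =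
  2 * (\sum_i \sum_j (a i ^+ 2 * b j ^+ 2) - \sum_i \sum_j (a i * b i * (a j * b j))).
  have -> : \sum_i \sum_j (a i * b j - a j * b i) ^+ 2 =
    \sum_i \sum_j (a i ^+ 2 * b j ^+ 2 - a i * b i * (a j * b j)) +
    \sum_i \sum_j (a j ^+ 2 * b i ^+ 2 - a i * b i * (a j * b j)).
    rewrite -big_split; apply: eq_bigr => i _; rewrite -big_split; apply: eq_bigr => j _ /=.
    ring.
  rewrite [X in _ + X]exchange_big /=.
  have -> : \sum_j \sum_i (a j ^+ 2 * b i ^+ 2 - a i * b i * (a j * b j)) =
      \sum_j \sum_i (a j ^+ 2 * b i ^+ 2 - a j * b j * (a i * b i)).
    by apply: eq_bigr => i _; apply: eq_bigr => j _; rewrite [a j * b j * _]mulrC.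
  have -> : \sum_i \sum_j (a i ^+ 2 * b j ^+ 2 - a i * b i * (a j * b j)) =
     \sum_i \sum_j (a i ^+ 2 * b j ^+ 2) - \sum_i \sum_j (a i * b i * (a j * b j)).
    by rewrite -sumrB; apply: eq_bigr => i _; rewrite sumrB.
  by rewrite mulr2n mulrDl mul1r.
have : 0 <= \sum_i \sum_j (a i * b j - a j * b i) ^+ 2.
  by apply: sumr_ge0 => i _; apply: sumr_ge0 => j _; apply: sqr_ge0.
rewrite Z X Y pmulr_rge0 ?ltr0n // subr_ge0 //.
Qed.

Lemma CS1 (I : finType) (a b : I -> R) :
  \sum_i a i * b i <= Num.sqrt (\sum_i a i ^+ 2) * Num.sqrt (\sum_i b i ^+ 2).
Proof.
rewrite -sqrtrM; last by apply: sumr_ge0 => i _; apply: sqr_ge0.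
apply: (le_trans (ler_norm _)); rewrite -sqrtr_sqr ler_sqrt ?CS2 //.
by apply: mulr_ge0; apply: sumr_ge0 => i _; apply: sqr_ge0.
Qed.

Definition ss {m n} (A : 'M[R]_(m, n)) := \sum_(i < m) \sum_(j < n) A i j ^+ 2.

Lemma ss_ge0 {m n} (A : 'M[R]_(m, n)) : 0 <= ss A.
Proof. by apply: sumr_ge0 => i _; apply: sumr_ge0 => j _; apply: sqr_ge0. Qed.

Lemma enormE {m n} (A : 'M[R]_(m, n)) : enorm A = Num.sqrt (ss A).
Proof. by []. Qed.

Lemma enorm_ge0 {m n} (A : 'M[R]_(m, n)) : 0 <= enorm A.
Proof. exact: sqrtr_ge0. Qed.

Lemma ss_pair {m n} (A : 'M[R]_(m, n)) : ss A = \sum_(p : ('I_m * 'I_n)%type) A p.1 p.2 ^+ 2.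
Proof. by rewrite /ss pair_bigA. Qed.

Lemma enormD {m n} (A B : 'M[R]_(m, n)) : enorm (A + B) <= enorm A + enorm B.
Proof.
have hA := enorm_ge0 A; have hB := enorm_ge0 B.
rewrite {1}enormE -(ger0_norm (addr_ge0 hA hB)) -sqrtr_sqr ler_sqrt; last exact: sqr_ge0.
have E : ss (A + B) = ss A + 2 * \sum_(p : ('I_m * 'I_n)%type) A p.1 p.2 * B p.1 p.2 + ss B.
  rewrite !ss_pair big_distrr -!big_split /=; apply: eq_bigr => p _; rewrite mxE; ring.
rewrite E sqrrD -(sqr_sqrtr (ss_ge0 A)) -(sqr_sqrtr (ss_ge0 B)) -!enormE.
have := CS1 _ (fun p : ('I_m * 'I_n)%type => A p.1 p.2) (fun p => B p.1 p.2).
rewrite -!ss_pair -!enormE => h.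
have -> : enorm A * enorm B *+ 2 = 2 * (enorm A * enorm B) by rewrite mulr_natl.
by rewrite lerD2r lerD2l ler_wpM2l.
Qed.

Lemma enormN {m n} (A : 'M[R]_(m, n)) : enorm (- A) = enorm A.
Proof. by rewrite !enormE /ss; congr Num.sqrt; apply: eq_bigr => i _; apply: eq_bigr => j _; rewrite mxE sqrrN. Qed.

Lemma enormB {m n} (A B : 'M[R]_(m, n)) : enorm (A - B) <= enorm A + enorm B.
Proof. by rewrite -(enormN B); apply: enormD. Qed.

Lemma enorm_tr {m n} (A : 'M[R]_(m, n)) : enorm A^T = enorm A.
Proof. rewrite !enormE /ss exchange_big; congr Num.sqrt; apply: eq_bigr => i _; apply: eq_bigr => j _; by rewrite mxE. Qed.

Lemma enormM {m n p} (A : 'M[R]_(m, n)) (B : 'M[R]_(n, p)) :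
  enorm (A *m B) <= enorm A * enorm B.
Proof.
rewrite !enormE -sqrtrM ?ss_ge0 // ler_sqrt; last by apply: mulr_ge0; apply: ss_ge0.
apply: (@le_trans _ _ (\sum_i \sum_k ((\sum_j A i j ^+ 2) * (\sum_j B j k ^+ 2)))).
  apply: ler_sum => i _; apply: ler_sum => k _; rewrite mxE; exact: CS2.
rewrite /ss big_distrl; apply: ler_sum => i _ /=.
rewrite -big_distrr /= exchange_big /=; done.
Qed.

Lemma entry_le {m n} (A : 'M[R]_(m, n)) i j : `|A i j| <= enorm A.
Proof.
rewrite -sqrtr_sqr enormE ler_sqrt ?ss_ge0 // ss_pair (bigD1 (i, j)) //= lerDl.
by apply: sumr_ge0 => p _; apply: sqr_ge0.
Qed.

Lemma enorm_eq0 {m n} (A : 'M[R]_(m, n)) : enorm A = 0 -> A = 0.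
Proof.
move=> h; apply/matrixP => i j; rewrite mxE; apply/eqP; rewrite -normr_le0 -h; exact: entry_le.
Qed.

Lemma mxnorm_le_enorm {m n} (A : 'M[R]_(m, n)) : `|A| <= enorm A.
Proof.
rewrite [leLHS]/Num.norm /= mx_normrE; apply: bigmax_le; first exact: enorm_ge0.
by move=> p _; apply: entry_le.
Qed.

Lemma entry_le_mxnorm {m n} (A : 'M[R]_(m, n)) i j : `|A i j| <= `|A|.
Proof.
rewrite [leRHS]/Num.norm /= mx_normrE; apply/bigmax_geP; right => /=; by exists (i, j).
Qed.

Lemma enorm_le_mxnorm {m n} (A : 'M[R]_(m, n)) : enorm A <= (m * n).+1%:R * `|A|.
Proof.
have h0 : 0 <= `|A| by [].
rewrite enormE -(ger0_norm (mulr_ge0 (ler0n _ _) h0)) -sqrtr_sqr ler_sqrt; last exact: sqr_ge0.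
apply: (@le_trans _ _ (\sum_(p : ('I_m * 'I_n)%type) `|A| ^+ 2)).
  rewrite ss_pair; apply: ler_sum => p _; rewrite -real_normK ?num_real //.
  by rewrite lerXn2r ?nnegrE // entry_le_mxnorm.
rewrite sumr_const card_prod !card_ord exprMn -[leLHS]mulr_natl; apply: ler_wpM2r; first exact: sqr_ge0.
rewrite -natrX ler_nat; case: (m * n)%N => // k; rewrite expnS; nia.
Qed.

End ENorm.

Lemma enorm0 (R : realType) {m n} : enorm (0 : 'M[R]_(m, n)) = 0.
Proof.
rewrite enormE /ss big1 ?sqrtr0 // => i _; rewrite big1 // => j _; by rewrite mxE expr0n.
Qed.
Lemma zid (V : zmodType) (a b c d : V) : a + b = (c + d) - (c - a) - (d - b).
Proof. rewrite !opprB addrACA -(addrA a) -opprD addrAC [c + d + _]addrC subrK //. Qed.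

Lemma step (R : realType) {n} (A Jx : 'M[R]_n) (E S F : 'cV[R]_n) (K eps del c a : R) :
  0 < K -> (forall v : 'cV[R]_n, enorm v <= K * enorm (A *m v)) ->
  0 <= c -> 0 <= a -> a * 20 <= 1 - c -> 0 <= eps -> 0 <= del ->
  eps * K <= a -> del * K <= a ->
  enorm (F - A *m E) <= eps * enorm E -> enorm (Jx - A) <= del ->
  enorm (F + Jx *m S) <= c * enorm F ->
  enorm (A *m (E + S)) <= (1 + c) / 2 * enorm (A *m E).
Proof.
move=> K0 HK c0 a0 ac eps0 del0 epsK delK HO HJ HR.
set u := enorm (A *m E).
have u0 : 0 <= u by apply: enorm_ge0.
have hE : enorm E <= K * u by apply: HK.
set nO := enorm (F - A *m E) in HO *.
have hO : nO <= a * u.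
  apply: (le_trans HO); apply: (le_trans (ler_wpM2l eps0 hE)).
  by rewrite mulrA; apply: ler_wpM2r.
set nF := enorm F in HR *.
have hF : nF <= nO + u by have := enormD _ (F - A *m E) (A *m E); rewrite subrK.
set nJS := enorm (Jx *m S).
have hJS : nJS <= enorm (F + Jx *m S) + nF.
  by have := enormB _ (F + Jx *m S) F; rewrite addrC addKr.
set nS := enorm S.
have nS0 : 0 <= nS by apply: enorm_ge0.
have hAS : enorm (A *m S) <= nJS + del * nS.
  have -> : A *m S = Jx *m S - (Jx - A) *m S by rewrite mulmxBl opprB addrC subrK.
  apply: (le_trans (enormB _ _ _)); rewrite lerD2l.
  apply: (le_trans (enormM _ _ _)); by apply: ler_wpM2r.
have h1 : nS <= K * nJS + a * nS.
  apply: (le_trans (HK S)); apply: (le_trans (ler_wpM2l (ltW K0) hAS)).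
  rewrite mulrDr lerD2l mulrA; apply: ler_wpM2r => //; by rewrite mulrC.
have h2 : a * nS <= nS / 20.
  rewrite mulrC ler_pdivlMr // -mulrA -[leRHS]mulr1; apply: ler_wpM2l => //; lra.
have hS : nS <= 2 * (K * nJS) by lra.
have h3 : del * nS <= 2 * a * nJS.
  apply: (le_trans (ler_wpM2l del0 hS)).
  have -> : del * (2 * (K * nJS)) = (del * K) * (2 * nJS) by ring.
  have -> : 2 * a * nJS = a * (2 * nJS) by ring.
  by apply: ler_wpM2r => //; apply: mulr_ge0 => //; apply: enorm_ge0.
have hfin : enorm (A *m (E + S)) <= c * nF + nO + del * nS.
  have -> : A *m (E + S) = (F + Jx *m S) - (F - A *m E) - (Jx - A) *m S.
    by rewrite mulmxDr mulmxBl; apply: zid.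
  apply: (le_trans (enormB _ _ _)); apply: (le_trans (lerD (enormB _ _ _) (enormM _ _ _))).
  apply: lerD; first by apply: lerD.
  by apply: ler_wpM2r => //; apply: enorm_ge0.
have nF0 : 0 <= nF by apply: enorm_ge0.
have nJS0 : 0 <= nJS by apply: enorm_ge0.
have c1 : c <= 1 by lra.
have a1 : a <= 1 / 20 by lra.
have k1 : nJS <= (1 + c) * nF by lra.
have k2 : 2 * a * nJS <= 2 * a * ((1 + c) * nF).
  by apply: ler_wpM2l => //; lra.
have k4 : nF <= (1 + a) * u by lra.
have k5 : (c + 2 * a * (1 + c)) * nF <= (c + 2 * a * (1 + c)) * ((1 + a) * u).
  by apply: ler_wpM2l => //; nra.
have G : (c + 2 * a * (1 + c)) * (1 + a) + a <= (1 + c) / 2 by nra.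
have G2 : ((c + 2 * a * (1 + c)) * (1 + a) + a) * u <= (1 + c) / 2 * u.
  by apply: ler_wpM2r.
have k6 : enorm (A *m (E + S)) <= (c + 2 * a * (1 + c)) * nF + a * u.
  have e : (c + 2 * a * (1 + c)) * nF = c * nF + 2 * a * ((1 + c) * nF) by ring.
  rewrite e; lra.
have e2 : ((c + 2 * a * (1 + c)) * (1 + a) + a) * u = (c + 2 * a * (1 + c)) * ((1 + a) * u) + a * u by ring.
lra.
Qed.
Lemma diff_bound (R : realType) n (f : 'rV[R]_n -> 'rV[R]_n) (xstar : 'rV[R]_n) (e : R) :
  differentiable f xstar -> 0 < e ->
  exists2 r, 0 < r & forall h, `|h| < r ->
    `|f (h + xstar) - (f xstar + h *m jacobian f xstar)| <= e * `|h|.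
Proof.
move=> df e0.
have := diff_locally df; move/eqaddoP => /(_ e e0) /nbhs_norm0P [r r0 Hr].
exists r => // h hr; have := Hr h hr => /=.
by rewrite /jacobian mul_rV_lin1.
Qed.

Lemma cont_bound (R : realType) n (J : 'rV[R]_n -> 'M[R]_n) (xstar : 'rV[R]_n) (e : R) :
  J w @[w --> xstar] --> J xstar -> 0 < e ->
  exists2 r, 0 < r & forall w, `|w - xstar| < r -> `|J w - J xstar| < e.
Proof.
move=> cJ e0.
have := cJ; move/cvgrPdist_lt => /(_ e e0) /nbhs_normP [r r0 Hr].
exists r => // w hw; rewrite distrC; apply: (Hr w) => /=; by rewrite distrC.
Qed.

Theorem theorem5p1 (R : realType) (n : nat) (f : 'rV[R]_n -> 'rV[R]_n)
  (xstar : 'rV[R]_n) :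
  f xstar = 0 ->
  (exists r1 : R, 0 < r1 /\
     forall z : 'rV[R]_n, enorm (z - xstar) < r1 ->
       differentiable f z /\ (Jf f w @[w --> z] --> Jf f z)) ->
  Jf f xstar \in unitmx ->
  forall c : R, 0 < c -> c < 1 ->
  exists r0 : R, 0 < r0 /\
    forall (k : nat -> nat) (P V : forall j : nat, 'M[R]_(n, k j))
           (x : nat -> 'rV[R]_n),
      enorm (x 0%N - xstar) < r0 ->
      (forall j, (V j)^T *m V j = 1%:M) ->
      (forall j, x j.+1 = x j + (P j *m (- ((V j)^T *m (f (x j))^T)))^T) ->
      (forall j,
        let y := - ((V j)^T *m (f (x j))^T) in
        let W := Jf f (x j) *m P j - V j in
        let mu := enorm (W *m y) / enorm (f (x j)) in
        let eta := enorm ((f (x j))^T + V j *m y) / enorm (f (x j)) in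
        mu + eta <= c) ->
      x @ \oo --> xstar.
Proof.
move=> fx0 [r1 [r10 Hr1]] Au c c0 c1.
have [dfx cJ] : differentiable f xstar /\ (Jf f w @[w --> xstar] --> Jf f xstar).
  by apply: Hr1; rewrite subrr enorm0.
set A := Jf f xstar.
set K := enorm (invmx A) + 1.
have K0 : 0 < K by rewrite /K ltr_pwDr ?ltr01 ?enorm_ge0.
have HK : forall v : 'cV[R]_n, enorm v <= K * enorm (A *m v).
  move=> v; rewrite -{1}(mulKmx Au v); apply: (le_trans (enormM _ _ _)).
  by apply: ler_wpM2r; [apply: enorm_ge0 | rewrite /K lerDl].
set a := (1 - c) / 20.
have a0 : 0 < a by rewrite /a divr_gt0 // subr_gt0.
set eps := a / K.
have eps0 : 0 < eps by rewrite divr_gt0.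
have epsK : eps * K = a by rewrite /eps divfK // gt_eqF.
set N1 := ((1 * n).+1)%:R : R.
have N10 : 0 < N1 by rewrite ltr0n.
set N2 := ((n * n).+1)%:R : R.
have N20 : 0 < N2 by rewrite ltr0n.
have [rho1 rho10 Hd] := @diff_bound R n f xstar _ dfx (divr_gt0 eps0 N10).
have [rho2 rho20 Hc2] := @cont_bound R n (Jf f) xstar _ cJ (divr_gt0 eps0 N20).
set rho := Num.min rho1 rho2.
have rho0 : 0 < rho by rewrite lt_min rho10 rho20.
set LA := enorm A + 1.
have LA0 : 0 < LA by rewrite /LA ltr_pwDr ?ltr01 ?enorm_ge0.
exists (rho / (K * LA)); split; first by rewrite divr_gt0 // mulr_gt0.
move=> k P V x hx0 HV Hx Hc.
set E := fun j => (x j - xstar)^T.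
set t := (1 + c) / 2.
have t0 : 0 <= t by rewrite /t divr_ge0 // addr_ge0 // ltW.
have t1 : t < 1 by rewrite /t ltr_pdivrMr //; lra.
have key : forall j, `|x j - xstar| < rho ->
    enorm (A *m E j.+1) <= t * enorm (A *m E j).
  move=> j hj.
  have hj1 : `|x j - xstar| < rho1 by apply: (lt_le_trans hj); rewrite ge_min lexx.
  have hj2 : `|x j - xstar| < rho2 by apply: (lt_le_trans hj); rewrite ge_min lexx orbT.
  set y := - ((V j)^T *m (f (x j))^T).
  set S := P j *m y.
  set F := (f (x j))^T.
  have ES : E j.+1 = E j + S by rewrite /E Hx /S /y addrAC linearD /= trmxK.
  rewrite ES; apply: (@step R n A (Jf f (x j)) (E j) S F K eps eps c a).
  - exact: K0.
  - exact: HK.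
  - exact: ltW.
  - exact: ltW.
  - by rewrite /a; lra.
  - exact: ltW.
  - exact: ltW.
  - by rewrite epsK.
  - by rewrite epsK.
  -
    have := Hd (x j - xstar) hj1; rewrite subrK fx0 add0r => hb.
    have -> : F - A *m E j = (f (x j) - (x j - xstar) *m jacobian f xstar)^T.
      by rewrite /F /A /E /Jf [in RHS]linearB /= trmx_mul.
    rewrite enorm_tr /E enorm_tr.
    apply: (le_trans (enorm_le_mxnorm _ _)).
    apply: (le_trans (ler_wpM2l (ltW N10) hb)).
    rewrite mulrA mulrCA divff ?gt_eqF // mulr1; apply: ler_wpM2l; first exact: ltW.
    exact: mxnorm_le_enorm.
  - have := Hc2 (x j) hj2 => hb.
    apply: (le_trans (enorm_le_mxnorm _ _)).
    have -> : eps = N2 * (eps / N2) by rewrite mulrCA divff ?gt_eqF // mulr1.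
    by apply: ler_wpM2l; [exact: ltW | exact: ltW].
  -
    have := Hc j; cbv zeta; rewrite -/y -/F.
    have [F0|Fn0] := eqVneq (enorm (f (x j))) 0.
      move=> _; rewrite /F /S /y (@enorm_eq0 _ _ _ _ F0).
      by rewrite trmx0 mulmx0 oppr0 !mulmx0 addr0 enorm0 mulr0.
    have Fp : 0 < enorm (f (x j)) by rewrite lt_def Fn0 enorm_ge0.
    rewrite -mulrDl ler_pdivrMr // => hc.
    have -> : F + Jf f (x j) *m S = (F + V j *m y) + (Jf f (x j) *m P j - V j) *m y.
      by rewrite /S mulmxBl mulmxA addrACA subrr addr0.
    apply: (le_trans (enormD _ _ _)); rewrite /F enorm_tr addrC; exact: hc.
set u0 := enorm (A *m E 0%N).
have u0lt : K * u0 < rho.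
  have : u0 <= LA * enorm (E 0%N).
    apply: (le_trans (enormM _ _ _)); apply: ler_wpM2r; [exact: enorm_ge0 | by rewrite /LA lerDl].
  rewrite /E enorm_tr => h.
  have h2 : LA * enorm (x 0%N - xstar) < LA * (rho / (K * LA)) by rewrite ltr_pM2l.
  have -> : rho = K * (LA * (rho / (K * LA))).
    by rewrite mulrA [K * LA]mulrC [RHS]mulrC divfK // mulf_neq0 // gt_eqF.
  by rewrite ltr_pM2l //; apply: (le_lt_trans h).
have inball : forall j, enorm (A *m E j) <= u0 -> `|x j - xstar| < rho.
  move=> j h; apply: (le_lt_trans (mxnorm_le_enorm _ _)).
  rewrite -enorm_tr -/(E j); apply: (le_lt_trans (HK _)); apply: le_lt_trans u0lt.
  by apply: ler_wpM2l => //; exact: ltW.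
have geo : forall j, enorm (A *m E j) <= t ^+ j * u0.
  elim=> [|j IH]; first by rewrite expr0 mul1r.
  have hb : enorm (A *m E j) <= u0.
    apply: (le_trans IH); rewrite -[leRHS]mul1r; apply: ler_wpM2r; first exact: enorm_ge0.
    by apply: exprn_ile1 => //; exact: ltW.
  apply: (le_trans (key j (inball j hb))); rewrite exprS -mulrA.
  by apply: ler_wpM2l.
apply/cvgrPdist_lt => e e0.
have tc : `|t| < 1 by rewrite ger0_norm.
have := cvg_expr tc; move/cvgrPdist_lt.
have ee0 : 0 < e / (K * (u0 + 1)).
  by rewrite divr_gt0 // mulr_gt0 // ltr_pwDr ?ltr01 ?enorm_ge0.
move=> /(_ _ ee0); apply: filterS => j /=; rewrite sub0r normrN ger0_norm ?exprn_ge0 // => hj.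
rewrite distrC; apply: (le_lt_trans (mxnorm_le_enorm _ _)).
rewrite -enorm_tr -/(E j); apply: (le_lt_trans (HK _)).
apply: (le_lt_trans (ler_wpM2l (ltW K0) (geo j))).
have u00 : 0 <= u0 by apply: enorm_ge0.
rewrite ltr_pdivlMr ?mulr_gt0 ?ltr_pwDr ?ltr01 // in hj.
have : t ^+ j * u0 <= t ^+ j * (u0 + 1) by apply: ler_wpM2l; rewrite ?exprn_ge0 ?lerDl.
have : 0 <= t ^+ j by rewrite exprn_ge0.
nra.
exact: enorm_ge0.
Qed.
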